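(* Let $\Gamma$ be a $\mathbb{Z}^d$-periodic graph with fundamental domain $W$, identified with $[n]$. The generic dispersion polynomial $\Phi(z,\lambda,e,V)=\det M(z,\lambda,e,V)$, where $M(z,\lambda,e,V)=\lambda I_n-H(z,e,V)$, is cancellation-free.
   Context: A $\mathbb{Z}^d$-periodic graph $\Gamma$ is a simple undirected graph with bounded vertex degrees and a free action of $\mathbb{Z}^d$ by automorphisms, $(\alpha,v)\mapsto\alpha+v$, with finitely many orbits of vertices and edges; $W$ contains one vertex from each vertex orbit. The generic Floquet matrix $H(z,e,V)$ is the $W\times W$ matrix with $(v,u)$ entry $\delta_{v,u}V(v)-\sum_{\alpha\in\mathbb{Z}^d:\ v\sim\alpha+u}e_{(v,\alpha+u)}z^\alpha$, where the edge weights $e$ (one indeterminate per $\mathbb{Z}^d$-orbit of edges, $e_{(u,v)}=e_{(v,u)}$) and potentials $V(v)$ (one indeterminate per $v\in W$) are independent indeterminates, and $z^\alpha=z_1^{\alpha_1}\cdots z_d^{\alpha_d}$. For an $n\times n$ matrix $M=(f_{i,j})$ of (Laurent) polynomials, $\det M=\sum_{w\in S_n}\mathrm{sgn}(w)M_w$ with $M_w=f_{1,w(1)}\cdots f_{n,w(n)}$; $\det M$ is cancellation-free if for every $w\in S_n$ with $M_w\neq 0$, every monomial occurring in $M_w$ occurs in $\det M$ (i.e. the support of $M_w$ is contained in the support of $\det M$). Here monomials are in all the variables $z,\lambda,e,V$. *)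

(* Defs.v *)
From mathcomp Require Import all_boot all_order all_algebra perm.
Set Implicit Arguments. Unset Strict Implicit. Unset Printing Implicit Defensive.
Import GRing.Theory Num.Theory.
Local Open Scope ring_scope.

(* A Laurent monomial over a finite set of variables X is an exponent vector X -> int.
   A Laurent polynomial is represented by a formal (unnormalised) list of terms
   (coefficient, monomial); its actual coefficient at a monomial is [lcoef]. *)
Definition lmonom (X : finType) := {ffun X -> int}.
Definition lpoly (X : finType) := seq (int * lmonom X).

Definition lcoef (X : finType) (p : lpoly X) (mo : lmonom X) : int :=
  \sum_(t <- p | t.2 == mo) t.1.

Definition occurs (X : finType) (mo : lmonom X) (p : lpoly X) : bool :=
  lcoef p mo != 0.

Definition lone (X : finType) : lpoly X := [:: (1, 0)].
Definition lscale (X : finType) (c : int) (p : lpoly X) : lpoly X :=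
  [seq (c * t.1, t.2) | t <- p].
Definition lmul (X : finType) (p q : lpoly X) : lpoly X :=
  [seq (a.1 * b.1, a.2 + b.2) | a <- p, b <- q].
Definition lprod (X : finType) (ps : seq (lpoly X)) : lpoly X :=
  foldr (@lmul X) (lone X) ps.

Definition Var (d m n : nat) : finType := ('I_d + unit + 'I_m + 'I_n)%type.
Definition zvar d m n (i : 'I_d) : Var d m n := inl (inl (inl i)).
Definition lamvar d m n : Var d m n := inl (inl (inr tt)).
Definition evar d m n (k : 'I_m) : Var d m n := inl (inr k).
Definition Vvar d m n (v : 'I_n) : Var d m n := inr v.

Definition xmon (X : finType) (x : X) : lmonom X := [ffun y => ((y == x) : nat)%:Z].
Definition zmon d m n (al : {ffun 'I_d -> int}) : lmonom (Var d m n) :=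
  [ffun y => match y with inl (inl (inl i)) => al i | _ => 0 end].

(* Vertex set W x Z^d with W = 'I_n; Z^d acts freely by translation of the second
   component, so (u, alpha) is the vertex alpha + u. *)
Definition vert (d n : nat) := ('I_n * {ffun 'I_d -> int})%type.
Definition shift d n (ga : {ffun 'I_d -> int}) (x : vert d n) : vert d n := (x.1, x.2 + ga).
Definition vtx d n (u : 'I_n) (al : {ffun 'I_d -> int}) : vert d n := (u, al).

(* adj is a simple graph on W x Z^d, invariant under the Z^d action, with finitely many
   orbits of edges: every edge orbit has a representative (u,0) ~ (v,alpha) with
   |alpha_i| <= B.  (This also gives bounded vertex degrees.) *)
Definition periodic_graph (d n B : nat) (adj : vert d n -> vert d n -> bool) : Prop :=
  [/\ (forall x y, adj x y = adj y x),
      (forall x, ~~ adj x x),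
      (forall ga x y, adj (shift ga x) (shift ga y) = adj x y) &
      (forall u v al, adj (vtx u 0) (vtx v al) -> forall i, `|al i| <= B%:Z)].

Definition edge_orbit_labelling (d n m : nat) (adj : vert d n -> vert d n -> bool)
    (lab : vert d n -> vert d n -> 'I_m) : Prop :=
  (forall x y x' y', adj x y -> adj x' y' ->
     (lab x y = lab x' y' <->
      exists ga, (x' = shift ga x /\ y' = shift ga y) \/ (x' = shift ga y /\ y' = shift ga x)))
  /\ (forall k : 'I_m, exists x y, adj x y /\ lab x y = k).

Definition box (d B : nat) : seq {ffun 'I_d -> int} :=
  [seq [ffun i => (f i : nat)%:Z - B%:Z] | f : {ffun 'I_d -> 'I_(B + B).+1} <- enum {ffun 'I_d -> 'I_(B + B).+1}].

Section Floquet.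
Variables (d n m B : nat) (adj : vert d n -> vert d n -> bool) (lab : vert d n -> vert d n -> 'I_m).

Definition Hentry (v u : 'I_n) : lpoly (Var d m n) :=
  (if v == u then [:: (1, xmon (Vvar d m v))] else [::]) ++
  [seq (-1, xmon (evar d n (lab (vtx v 0) (vtx u al))) + zmon m n al)
    | al <- box d B & adj (vtx v 0) (vtx u al)].

Definition Mentry (v u : 'I_n) : lpoly (Var d m n) :=
  (if v == u then [:: (1, xmon (lamvar d m n))] else [::]) ++ lscale (-1) (Hentry v u).

Definition Mterm (w : 'S_n) : lpoly (Var d m n) :=
  lprod [seq Mentry i (w i) | i <- enum 'I_n].

Definition dispersion : lpoly (Var d m n) :=
  flatten [seq lscale ((-1) ^+ odd_perm w) (Mterm w) | w <- enum {perm 'I_n}].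

End Floquet.

Definition cancellation_free d n m B adj lab : Prop :=
  forall (w : 'S_n) (mo : lmonom (Var d m n)),
    occurs mo (@Mterm d n m B adj lab w) -> occurs mo (@dispersion d n m B adj lab).

(* Main.v *)
Require Import Defs.
From mathcomp Require Import all_boot all_order all_algebra perm.
Set Implicit Arguments. Unset Strict Implicit. Unset Printing Implicit Defensive.

Definition Hrel n (w1 w2 : 'S_n) : Prop :=
  forall u v : 'I_n, u != v -> ((w1 u == v) + (w1 v == u) = (w2 u == v) + (w2 v == u))%N.

Lemma HrelV n (w1 w2 : 'S_n) : Hrel w1 w2 -> Hrel w1 (w2^-1)%g.
Proof.
move=> H u v uv.
have E : forall a b, ((w2^-1)%g a == b) = (w2 b == a).
  by move=> a b; apply/eqP/eqP => [<-|<-]; rewrite ?permKV ?permK.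
by rewrite !E [in RHS]addnC H.
Qed.

Lemma Hrel_fix n (w1 w2 : 'S_n) : Hrel w1 w2 -> (forall x, w1 x = x) -> w2 = 1%g.
Proof.
move=> H h1; apply/permP => x; rewrite perm1.
apply/eqP; apply/negPn/negP => nx.
have := H x (w2 x) (negbT _); rewrite !h1 eqxx.
Abort.

Lemma Hrel_fix n (w1 w2 : 'S_n) : Hrel w1 w2 -> (forall x, w1 x = x) -> w2 = 1%g.
Proof.
move=> H h1; apply/permP => x; rewrite perm1.
apply/eqP; apply/negPn/negP => nx.
have nx' : x != w2 x by rewrite eq_sym.
have := H x (w2 x) nx'; rewrite !h1 eqxx (negbTE nx') (negbTE nx).
by [].
Qed.

Lemma permA_ind n k (w1 w2 : 'S_n) :
  #|[set x | w1 x != x]| <= k -> Hrel w1 w2 -> odd_perm w1 = odd_perm w2.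
Proof.
elim: k w1 w2 => [|k IH] w1 w2 Hk H.
  have h1 : forall x, w1 x = x.
    move=> x; apply/eqP; apply/negPn/negP => nx.
    have : x \in [set x | w1 x != x] by rewrite inE.
    by move: Hk; rewrite leqn0 cards_eq0 => /eqP ->; rewrite inE.
  have -> : w2 = 1%g by apply: (Hrel_fix H h1).
  by have -> : w1 = 1%g by apply/permP => x; rewrite perm1.
case: (pickP (fun x => w1 x != x)) => [i /= Hi|none]; last first.
  have h1 : forall x, w1 x = x by move=> x; apply/eqP; move: (none x) => /= /negbFE.
  have -> : w2 = 1%g by apply: (Hrel_fix H h1).
  by have -> : w1 = 1%g by apply/permP => x; rewrite perm1.
move: (erefl (w1 i)); move: {2}(w1 i) => j Ej.
have ij : i != j by rewrite -Ej eq_sym.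
have Hor : w2 i = j \/ w2 j = i.
  have := H i j ij; rewrite Ej eqxx /=.
  move=> E; case: (eqVneq (w2 i) j) => [->|n1]; first by left.
  case: (eqVneq (w2 j) i) => [->|n2]; first by right.
  by move: E; rewrite (negbTE n1) (negbTE n2).
wlog Hw2 : w2 H {Hor} / w2 i = j.
  move=> Hw; case: Hor => [|E]; first exact: Hw.
  rewrite -(odd_permV w2); apply: Hw; first exact: HrelV.
  by rewrite -E permK.
have injw1 : forall a b, (w1 a == w1 b) = (a == b) by move=> a b; rewrite (inj_eq perm_inj).
have injw2 : forall a b, (w2 a == w2 b) = (a == b) by move=> a b; rewrite (inj_eq perm_inj).
have F1 : forall x, (w1 x == i) = (w2 x == i).
  move=> x; case: (eqVneq i x) => [<-|ix].
    by rewrite (negbTE Hi) Hw2 eq_sym (negbTE ij).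
  have := H i x ix; rewrite Hw2 Ej.
  by move/eqP; rewrite eqn_add2l => /eqP; case: (w1 x == i); case: (w2 x == i).
have F2 : w1 j = w2 j.
  have yj : j != w1 j.
    apply/negP => /eqP e; move/negP: ij; apply.
    by rewrite -injw1 Ej -e.
  have := H j (w1 j) yj; rewrite eqxx.
  have e1 : (w1 (w1 j) == j) = (w1 j == i) by rewrite -{2}Ej injw1.
  have e2 : (w2 (w1 j) == j) = (w1 j == i) by rewrite -{2}Hw2 injw2.
  rewrite e1 e2 add1n.
  by case: (eqVneq (w2 j) (w1 j)) => [->|]; case: (w1 j == i).
pose t := tperm i j.
have E1 : forall a b, (t a == b) = (a == t b) by move=> a b; rewrite (inv_eq (tpermK i j)).
have Ht : forall u v, v \in [:: i; j] -> (w1 u == t v) = (w2 u == t v).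
  move=> u v; rewrite !inE => /orP [] /eqP ->.
    by rewrite /t tpermL -{1}Ej -Hw2 injw1 injw2.
  by rewrite /t tpermR F1.
have Hs : forall v, v \in [:: i; j] -> w1 v = w2 v.
  by move=> v; rewrite !inE => /orP [] /eqP ->; rewrite ?Ej ?Hw2.
have tD : forall u, u \notin [:: i; j] -> t u = u.
  by move=> u; rewrite !inE negb_or => /andP [a b]; rewrite /t tpermD // eq_sym.
have IH' := IH (w1 * t)%g (w2 * t)%g.
have O : odd_perm (w1 * t)%g = odd_perm (w2 * t)%g.
  apply: IH'.
    have P : [set x | (w1 * t)%g x != x] \proper [set x | w1 x != x].
      apply/properP; split.
        apply/subsetP => x; rewrite !inE permM; apply: contra => /eqP wx.
        have xi : x != i by apply: contraNneq Hi => <-; rewrite wx.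
        have xj : x != j.
          apply/negP => /eqP ex; move/negP: xi; apply.
          by rewrite -injw1 Ej wx ex.
        by rewrite wx /t tpermD // eq_sym.
      by exists i; rewrite !inE ?Hi // permM Ej /t tpermR eqxx.
    by have := proper_card P => h; rewrite -ltnS (leq_trans h).
  move=> u v uv; rewrite !permM !E1.
  case: (boolP (v \in [:: i; j])) => hv; case: (boolP (u \in [:: i; j])) => hu.
  - by rewrite Ht // Ht.
  - by rewrite Ht // (tD _ hu) Hs.
  - by rewrite (tD _ hv) (Hs _ hu) Ht.
  - by rewrite (tD _ hv) (tD _ hu) H.
by move: O; rewrite !odd_permM; case: (odd_perm w1); case: (odd_perm w2); case: (odd_perm t).
Qed.

Lemma permA n (w1 w2 : 'S_n) : Hrel w1 w2 -> odd_perm w1 = odd_perm w2.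
Proof. exact: (@permA_ind n _ w1 w2 (leqnn _)). Qed.

Import GRing.Theory Num.Theory.
Local Open Scope ring_scope.

Definition pm n (i j u v : 'I_n) : bool := ((i == u) && (j == v)) || ((i == v) && (j == u)).
Definition vdeg d m n (mo : lmonom (Var d m n)) : int := \sum_(v : 'I_n) mo (Vvar d m v).
Definition cp d m n (ends : 'I_m -> 'I_n * 'I_n) (mo : lmonom (Var d m n)) (u v : 'I_n) : int :=
  \sum_(k : 'I_m | pm (ends k).1 (ends k).2 u v) mo (evar d n k).
Definition Q d m n (ends : 'I_m -> 'I_n * 'I_n) (c : 'I_n -> 'I_n -> int)
   (t : int * lmonom (Var d m n)) : Prop :=
  exists N : nat, [/\ vdeg t.2 = N%:Z, t.1 = (-1) ^+ N &
     forall u v, u != v -> cp ends t.2 u v = c u v].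

Section Gen.
Variables (d m n : nat) (ends : 'I_m -> 'I_n * 'I_n).
Notation X := (Var d m n).

Lemma lcoef_cat (p q : lpoly X) mo : lcoef (p ++ q) mo = lcoef p mo + lcoef q mo.
Proof. by rewrite /lcoef big_cat. Qed.

Lemma lcoef_scale c (p : lpoly X) mo : lcoef (lscale c p) mo = c * lcoef p mo.
Proof. by rewrite /lcoef /lscale big_map mulr_sumr. Qed.

Lemma vdegD (a b : lmonom X) : vdeg (a + b) = vdeg a + vdeg b.
Proof. by rewrite /vdeg -big_split; apply: eq_bigr => v _; rewrite ffunE. Qed.

Lemma cpD (a b : lmonom X) u v : cp ends (a + b) u v = cp ends a u v + cp ends b u v.
Proof. by rewrite /cp -big_split; apply: eq_bigr => k _; rewrite ffunE. Qed.

Lemma Q_lone t : t \in lone X -> Q ends (fun _ _ => 0) t.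
Proof.
rewrite inE => /eqP ->; exists 0%N; split => //.
  by rewrite /vdeg big1 // => v _; rewrite ffunE.
by move=> u v _; rewrite /cp big1 // => k _; rewrite ffunE.
Qed.

Lemma Q_lmul (p q : lpoly X) c1 c2 :
  (forall t, t \in p -> Q ends c1 t) -> (forall t, t \in q -> Q ends c2 t) ->
  forall t, t \in lmul p q -> Q ends (fun u v => c1 u v + c2 u v) t.
Proof.
move=> Hp Hq t /allpairsP [[a b] [/= ap bq ->]].
have [N1 [v1 s1 c1e]] := Hp _ ap; have [N2 [v2 s2 c2e]] := Hq _ bq.
exists (N1 + N2)%N; split => /=.
- by rewrite vdegD v1 v2.
- by rewrite s1 s2 exprD.
- by move=> u v uv; rewrite cpD c1e // c2e.
Qed.

Lemma Q_lprod (F : 'I_n -> lpoly X) (c : 'I_n -> 'I_n -> 'I_n -> int) (s : seq 'I_n) :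
  (forall i t, t \in F i -> Q ends (c i) t) ->
  forall t, t \in lprod [seq F i | i <- s] ->
    Q ends (fun u v => \sum_(i <- s) c i u v) t.
Proof.
move=> HF; elim: s => [|i s IH] t /=.
  move=> /Q_lone [N [h1 h2 h3]]; exists N; split => // u v uv.
  by rewrite h3 // big_nil.
move=> /(Q_lmul (HF i) IH) [N [h1 h2 h3]]; exists N; split => // u v uv.
by rewrite h3 // big_cons.
Qed.

End Gen.

Lemma Vvar_eq d m n (a b : 'I_n) : (Vvar d m a == Vvar d m b) = (a == b).
Proof. by apply/eqP/eqP => [[]|->]. Qed.
Lemma evar_eq d m n (a b : 'I_m) : (evar d n a == evar d n b) = (a == b).
Proof. by apply/eqP/eqP => [[]|->]. Qed.

Section Ent.
Variables (d n m B : nat) (adj : vert d n -> vert d n -> bool) (lab : vert d n -> vert d n -> 'I_m).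
Variable (ends : 'I_m -> 'I_n * 'I_n).
Hypothesis Hends : forall i j al, adj (vtx i 0) (vtx j al) ->
  let e := ends (lab (vtx i 0) (vtx j al)) in (e.1 = i /\ e.2 = j) \/ (e.1 = j /\ e.2 = i).

Lemma pm_ii (i u v : 'I_n) : u != v -> pm i i u v = false.
Proof.
move=> uv; rewrite /pm; apply/negP => /orP [] /andP [/eqP a /eqP b];
by move/negP: uv; apply; rewrite -a -b.
Qed.

Lemma Q_Mentry i j t : t \in Mentry B adj lab i j -> Q ends (fun u v => (pm i j u v : nat)%:Z) t.
Proof.
rewrite /Mentry mem_cat => /orP [].
  case: eqP => [<-|_]; last by rewrite in_nil.
  rewrite inE => /eqP ->; exists 0%N; split => //.
    by rewrite /vdeg big1 // => v _; rewrite ffunE.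
  by move=> u v uv; rewrite pm_ii // /cp big1 // => k _; rewrite ffunE.
rewrite /lscale /Hentry map_cat mem_cat => /orP [].
  case: eqP => [<-|_]; last by rewrite in_nil.
  rewrite inE => /eqP -> /=; exists 1%N; split => //.
    rewrite /vdeg (bigD1 i) //= big1 ?ffunE ?Vvar_eq ?eqxx ?addr0 // => v vi.
    by rewrite ffunE Vvar_eq (negbTE vi).
  by move=> u v uv; rewrite pm_ii // /cp big1 // => k _; rewrite ffunE.
rewrite -map_comp => /mapP [al]; rewrite mem_filter => /andP [ha _] -> /=.
exists 0%N; split => //.
  by rewrite /vdeg big1 // => v _; rewrite !ffunE.
move=> u v uv; rewrite /cp.
set k := lab _ _.
rewrite (eq_bigr (fun k' => ((k' == k) : nat)%:Z)); last first.
  by move=> k' _; rewrite !ffunE evar_eq /= addr0.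
rewrite big_mkcond (bigD1 k) //= big1 ?addr0; last first.
  by move=> k' /negbTE ->; case: ifP.
rewrite eqxx; case: (Hends ha) => [[-> ->]|[-> ->]].
  by case: ifP.
by rewrite /pm orbC [_ && _]andbC [X in _ || X]andbC; case: ifP.
Qed.
End Ent.

Lemma sum_pm n (w : 'S_n) (u v : 'I_n) : u != v ->
  \sum_(i <- enum 'I_n) (pm i (w i) u v : nat)%:Z = ((w u == v) + (w v == u))%N%:Z.
Proof.
move=> uv; have vu : v != u by rewrite eq_sym.
rewrite big_enum /= (bigD1 u) // (bigD1 v) /=; last by rewrite vu.
rewrite big1 ?addr0; last first.
  move=> i /andP [iu iv]; rewrite /pm (negbTE iu) (negbTE iv) //.
rewrite /pm !eqxx (negbTE uv) (negbTE vu) /= orbF.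
by rewrite PoszD.
Qed.

Lemma sum_count (X : finType) (p : lpoly X) mo (s : int) :
  (forall t, t \in p -> t.2 == mo -> t.1 = s) ->
  \sum_(t <- p | t.2 == mo) t.1 = s * (count (fun t => t.2 == mo) p)%:Z.
Proof.
elim: p => [|t p IH] H; first by rewrite big_nil mulr0.
rewrite big_cons /= PoszD mulrDr -IH; last by move=> t' tp; apply: H; rewrite inE tp orbT.
case: ifP => h; last by rewrite mulr0 add0r.
by rewrite (H t) ?inE ?eqxx // mulr1.
Qed.

Theorem proposition2p1 (d n m B : nat)
    (adj : vert d n -> vert d n -> bool) (lab : vert d n -> vert d n -> 'I_m) :
  periodic_graph B adj -> edge_orbit_labelling adj lab ->
  cancellation_free B adj lab.
Proof.
move=> _ [Hlab Hsurj] w mo.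
have ex : forall k, exists p : vert d n * vert d n, adj p.1 p.2 && (lab p.1 p.2 == k).
  move=> k; have [x [y [a l]]] := Hsurj k; exists (x, y); by rewrite /= a l eqxx.
pose ends k := ((xchoose (ex k)).1.1, (xchoose (ex k)).2.1).
have Hends : forall i j al, adj (vtx i 0) (vtx j al) ->
  let e := ends (lab (vtx i 0) (vtx j al)) in (e.1 = i /\ e.2 = j) \/ (e.1 = j /\ e.2 = i).
  move=> i j al ha /=; set k := lab _ _.
  have /andP [hp /eqP hl] := xchooseP (ex k).
  have [/(_ hl) [ga [[e1 e2]|[e1 e2]]] _] := Hlab _ _ _ _ hp ha.
    have f1 := congr1 fst e1; have f2 := congr1 fst e2; simpl in f1, f2.
    by left; split; rewrite /ends /=; apply: esym.
  have f1 := congr1 fst e1; have f2 := congr1 fst e2; simpl in f1, f2.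
  by right; split; rewrite /ends /=; apply: esym.
have QM : forall (w' : 'S_n) t, t \in Mterm B adj lab w' ->
    Q ends (fun u v => \sum_(i <- enum 'I_n) (pm i (w' i) u v : nat)%:Z) t.
  move=> w' t; apply: (@Q_lprod d m n ends (fun i => Mentry B adj lab i (w' i))) => i t'.
  exact: Q_Mentry.
pose s : int := (-1) ^+ `|vdeg mo|%N.
have Cnt : forall w' : 'S_n, lcoef (Mterm B adj lab w') mo
    = s * (count (fun t => t.2 == mo) (Mterm B adj lab w'))%:Z.
  move=> w'; apply: sum_count => t tM /eqP tm.
  have [N [h1 h2 _]] := QM w' t tM.
  by rewrite h2 /s -tm h1.
have Par : forall w' : 'S_n, (0 < count (fun t => t.2 == mo) (Mterm B adj lab w'))%N ->
   (0 < count (fun t => t.2 == mo) (Mterm B adj lab w))%N -> odd_perm w' = odd_perm w.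
  move=> w'; rewrite -!has_count => /hasP [t1 t1M /eqP e1] /hasP [t2 t2M /eqP e2].
  apply: permA => u v uv.
  have [N1 [_ _ c1]] := QM w' t1 t1M; have [N2 [_ _ c2]] := QM w t2 t2M.
  have := c1 u v uv; rewrite e1 -e2 c2 // !sum_pm // => -[] ->.
  by [].
rewrite /occurs => hw.
have cw : (0 < count (fun t => t.2 == mo) (Mterm B adj lab w))%N.
  by move: hw; rewrite Cnt lt0n; apply: contraNneq => ->; rewrite mulr0.
have -> : lcoef (dispersion B adj lab) mo =
   \sum_(w' <- enum {perm 'I_n}) (-1) ^+ odd_perm w' * lcoef (Mterm B adj lab w') mo.
  rewrite /dispersion /lcoef big_flatten /= big_map; apply: eq_bigr => w' _.
  exact: lcoef_scale.
rewrite (eq_bigr (fun w' => (-1) ^+ odd_perm w * s *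
     (count (fun t => t.2 == mo) (Mterm B adj lab w'))%:Z)); last first.
  move=> w' _; rewrite Cnt.
  case: (posnP (count (fun t => t.2 == mo) (Mterm B adj lab w'))) => [->|cp0].
    by rewrite !mulr0.
  by rewrite (Par _ cp0 cw) mulrA.
rewrite -mulr_sumr mulf_neq0 ?mulf_neq0 ?signr_eq0 //.
rewrite big_enum /= (bigD1 w) //=; apply: lt0r_neq0; apply: ltr_wpDr.
  by apply: sumr_ge0.
by rewrite ltz_nat.
Qed.
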